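(* There exists a locally finite group $K$ with a proper left invariant metric $d_K$ such that $\operatorname{asdim}_{AN}(K,d_K)=\infty$ and all asymptotic cones of $(K,d_K)$ are ultrametric.
   Context: A group is locally finite if each of its finitely generated subgroups is finite. A metric $d_G$ on a group $G$ is proper left invariant if $d_G(gh,gk)=d_G(h,k)$ for all $g,h,k\in G$ and for every $R>0$ only finitely many $g$ satisfy $d_G(1,g)\le R$. $\operatorname{asdim}_{AN}(X)$ is the least $n$ such that for some constants $C>0,k$ and every $s>0$ there is a cover $\{\mathcal U_0,\dots,\mathcal U_n\}$ of $X$ whose members have $s$-scale connected components (classes of ''joined by a chain inside the set with consecutive distances $<s$'') of diameter $\le Cs+k$; $\infty$ if no such $n$. Asymptotic cone $\operatorname{Cone}_\omega(X,c,d)$: for a non-principal ultrafilter $\omega$, sequence $c$ in $X$, positive reals $d_n$ with $\lim_\omega d_n=\infty$, the sequences $(x_n)$ with $\lim_\omega \rho(x_n,c_n)/d_n<\infty$, pseudometric $\lim_\omega\rho(x_n,y_n)/d_n$, modulo distance zero. Ultrametric: $\rho(x,y)\le\max\{\rho(x,z),\rho(y,z)\}$. *)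

(* Defs.v *)
From Stdlib Require Import Reals List.
Open Scope R_scope.

Definition is_group {G : Type} (mul : G -> G -> G) (one : G) (inv : G -> G) : Prop :=
  (forall a b c, mul (mul a b) c = mul a (mul b c)) /\
  (forall a, mul one a = a) /\ (forall a, mul a one = a) /\
  (forall a, mul (inv a) a = one) /\ (forall a, mul a (inv a) = one).

Inductive gen_subgroup {G : Type} (mul : G -> G -> G) (one : G) (inv : G -> G)
    (S : list G) : G -> Prop :=
  | gen_base : forall x, In x S -> gen_subgroup mul one inv S x
  | gen_one : gen_subgroup mul one inv S one
  | gen_inv : forall x, gen_subgroup mul one inv S x -> gen_subgroup mul one inv S (inv x)
  | gen_mul : forall x y, gen_subgroup mul one inv S x -> gen_subgroup mul one inv S y ->
              gen_subgroup mul one inv S (mul x y).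

Definition finite_set {X : Type} (A : X -> Prop) : Prop :=
  exists l : list X, forall x, A x -> In x l.

Definition locally_finite {G : Type} (mul : G -> G -> G) (one : G) (inv : G -> G) : Prop :=
  forall S : list G, finite_set (gen_subgroup mul one inv S).

Definition is_metric {X : Type} (d : X -> X -> R) : Prop :=
  (forall x y, 0 <= d x y) /\
  (forall x y, d x y = 0 <-> x = y) /\
  (forall x y, d x y = d y x) /\
  (forall x y z, d x z <= d x y + d y z).

Definition proper_left_invariant_metric {G : Type} (mul : G -> G -> G) (one : G)
    (d : G -> G -> R) : Prop :=
  is_metric d /\
  (forall g h k, d (mul g h) (mul g k) = d h k) /\
  (forall r : R, r > 0 -> finite_set (fun g => d one g <= r)).

Inductive s_chain {X : Type} (d : X -> X -> R) (s : R) (U : X -> Prop) : X -> X -> Prop :=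
  | chain_refl : forall x, U x -> s_chain d s U x x
  | chain_step : forall x y z, U x -> d x y < s -> s_chain d s U y z -> s_chain d s U x z.

Definition asdim_AN_le {X : Type} (d : X -> X -> R) (n : nat) : Prop :=
  exists C k : R, C > 0 /\
    forall s : R, s > 0 ->
      exists U : nat -> X -> Prop,
        (forall x, exists i, (i <= n)%nat /\ U i x) /\
        (forall i, (i <= n)%nat ->
           forall x y, s_chain d s (U i) x y -> d x y <= C * s + k).

Definition asdim_AN_infinite {X : Type} (d : X -> X -> R) : Prop :=
  forall n : nat, ~ asdim_AN_le d n.

Definition ultrafilter (w : (nat -> Prop) -> Prop) : Prop :=
  w (fun _ => True) /\
  ~ w (fun _ => False) /\
  (forall A B : nat -> Prop, w A -> (forall n, A n -> B n) -> w B) /\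
  (forall A B : nat -> Prop, w A -> w B -> w (fun n => A n /\ B n)) /\
  (forall A : nat -> Prop, w A \/ w (fun n => ~ A n)).

Definition non_principal (w : (nat -> Prop) -> Prop) : Prop :=
  forall m : nat, ~ w (fun n => n = m).

Definition ulim (w : (nat -> Prop) -> Prop) (a : nat -> R) (L : R) : Prop :=
  forall eps : R, eps > 0 -> w (fun n => Rabs (a n - L) < eps).

Definition ulim_infty (w : (nat -> Prop) -> Prop) (a : nat -> R) : Prop :=
  forall M : R, w (fun n => a n > M).

Definition ubounded (w : (nat -> Prop) -> Prop) (a : nat -> R) : Prop :=
  exists M : R, w (fun n => a n <= M).

Definition cone_point {X : Type} (d : X -> X -> R) (w : (nat -> Prop) -> Prop)
    (c : nat -> X) (dn : nat -> R) (x : nat -> X) : Prop :=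
  ubounded w (fun n => d (x n) (c n) / dn n).

(* Passing to the quotient by distance zero
   does not affect this inequality. *)
Definition cone_ultrametric {X : Type} (d : X -> X -> R) (w : (nat -> Prop) -> Prop)
    (c : nat -> X) (dn : nat -> R) : Prop :=
  forall x y z : nat -> X,
    cone_point d w c dn x -> cone_point d w c dn y -> cone_point d w c dn z ->
    forall Lxy Lxz Lyz : R,
      ulim w (fun n => d (x n) (y n) / dn n) Lxy ->
      ulim w (fun n => d (x n) (z n) / dn n) Lxz ->
      ulim w (fun n => d (y n) (z n) / dn n) Lyz ->
      Lxy <= Rmax Lxz Lyz.

Definition all_cones_ultrametric {X : Type} (d : X -> X -> R) : Prop :=
  forall w : (nat -> Prop) -> Prop, ultrafilter w -> non_principal w ->
  forall (c : nat -> X) (dn : nat -> R),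
    (forall n, dn n > 0) -> ulim_infty w dn ->
    cone_ultrametric d w c dn.

(* Main.v *)
Require Import Defs.
Open Scope nat_scope.
From Stdlib Require Import Arith Lia List Bool.

Fixpoint cnt (f : nat -> bool) (T : nat) : nat :=
  match T with 0 => 0 | S T' => cnt f T' + (if f T' then 1 else 0) end.

Lemma cnt_ext f g T : (forall t, t < T -> f t = g t) -> cnt f T = cnt g T.
Proof. induction T; simpl; intros H; auto. rewrite IHT by (intros; apply H; lia). rewrite H by lia; auto. Qed.

Lemma cnt_false f T : (forall t, t < T -> f t = false) -> cnt f T = 0.
Proof. induction T; simpl; intros H; auto. rewrite IHT by (intros; apply H; lia). rewrite H by lia; auto. Qed.

Lemma cnt_pos f T t : t < T -> f t = true -> 1 <= cnt f T.
Proof.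
induction T; simpl; intros H1 H2; [lia|].
destruct (Nat.eq_dec t T) as [->|Hne]; [rewrite H2; lia|].
specialize (IHT ltac:(lia) H2); lia.
Qed.

Lemma cnt_xor f g T : cnt (fun t => xorb (f t) (g t)) T <= cnt f T + cnt g T.
Proof. induction T; simpl; auto. destruct (f T), (g T); simpl; lia. Qed.

Lemma cnt_xlt X Y T : cnt (fun t => xorb (t <? X) (t <? Y)) T = Nat.max (Nat.min X T) (Nat.min Y T) - Nat.min (Nat.min X T) (Nat.min Y T).
Proof.
induction T; simpl; [lia|]. rewrite IHT.
destruct (Nat.ltb_spec T X), (Nat.ltb_spec T Y); simpl; lia.
Qed.

Definition w (b a : nat) := cnt (fun t => Nat.testbit a (2 ^ b - 1 + t)) (2 ^ b).
Definition Aw (b : nat) := Nat.log2 b + 1.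
Definition phi (b x : nat) := if x =? 0 then 0 else Aw b + Nat.log2 x.
Definition lmax (l : list nat) := fold_right Nat.max 0 l.
Definition nu (a : nat) := lmax (map (fun b => phi b (w b a)) (seq 0 (S a))).

Lemma lmax_ge x l : In x l -> x <= lmax l.
Proof. induction l; simpl; intros H; [contradiction|]. destruct H as [->|H]; [lia|]. specialize (IHl H); lia. Qed.

Lemma lmax_in l : lmax l = 0 \/ In (lmax l) l.
Proof.
induction l; simpl; auto.
destruct IHl as [H|H]; rewrite ?H.
- destruct a; simpl; auto.
- destruct (Nat.le_ge_cases a (lmax l)).
  + right; right. rewrite Nat.max_r; auto.
  + right; left. rewrite Nat.max_l; auto.
Qed.

Lemma pow_ge b : b <= 2 ^ b - 1.
Proof. pose proof (Nat.pow_gt_lin_r 2 b ltac:(lia)); lia. Qed.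

Lemma bits_ge a p : a <= p -> Nat.testbit a p = false.
Proof.
intros H. destruct a as [|a]; [apply Nat.bits_0|].
apply Nat.bits_above_log2. pose proof (Nat.log2_lt_lin (S a) ltac:(lia)); lia.
Qed.

Lemma w_high b a : a < b -> w b a = 0.
Proof.
intros H; unfold w; apply cnt_false; intros t Ht. apply bits_ge. pose proof (pow_ge b); lia.
Qed.

Lemma nu_ge b a : phi b (w b a) <= nu a.
Proof.
destruct (Nat.le_gt_cases b a).
- apply lmax_ge. apply in_map_iff. exists b; split; auto. apply in_seq; lia.
- rewrite w_high by lia. unfold phi; simpl; lia.
Qed.

Lemma nu_attain a : nu a = 0 \/ exists b, nu a = phi b (w b a).
Proof.
unfold nu. destruct (lmax_in (map (fun b => phi b (w b a)) (seq 0 (S a)))) as [H|H]; auto.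
right. apply in_map_iff in H. destruct H as [b [Hb _]]. exists b; auto.
Qed.

Lemma w_xor b x y : w b (Nat.lxor x y) <= w b x + w b y.
Proof.
unfold w. rewrite (cnt_ext _ (fun t => xorb (Nat.testbit x (2 ^ b - 1 + t)) (Nat.testbit y (2 ^ b - 1 + t)))).
- apply cnt_xor.
- intros; apply Nat.lxor_spec.
Qed.

Lemma phi_mono b x y : x <= y -> phi b x <= phi b y.
Proof.
intros H; unfold phi. destruct (Nat.eqb_spec x 0); [lia|]. destruct (Nat.eqb_spec y 0); [lia|].
pose proof (Nat.log2_le_mono x y H); lia.
Qed.

Lemma phi_sub b x y z : z <= x + y -> phi b z <= phi b x + phi b y /\ phi b z <= Nat.max (phi b x) (phi b y) + 1.
Proof.
intros H.
destruct (Nat.eqb_spec z 0) as [->|Hz]. { replace (phi b 0) with 0 by reflexivity; split; lia. }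
destruct (Nat.eqb_spec x 0) as [->|Hx].
{ pose proof (phi_mono b z y ltac:(lia)); lia. }
destruct (Nat.eqb_spec y 0) as [->|Hy].
{ pose proof (phi_mono b z x ltac:(lia)); lia. }
assert (Hxy : forall u v, u <> 0 -> v <> 0 -> z <= u + v -> v <= u -> phi b z <= phi b u + phi b v /\ phi b z <= Nat.max (phi b u) (phi b v) + 1).
{ intros u v Hu Hv Huv Hvu.
  assert (Hl : Nat.log2 z <= S (Nat.log2 u)).
  { rewrite <- Nat.log2_double by lia. apply Nat.log2_le_mono; lia. }
  pose proof (phi_mono b v u Hvu).
  unfold phi in *. rewrite (proj2 (Nat.eqb_neq z 0) Hz), (proj2 (Nat.eqb_neq u 0) Hu), (proj2 (Nat.eqb_neq v 0) Hv) in *.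
  unfold Aw in *; lia. }
destruct (Nat.le_ge_cases y x).
- apply Hxy; auto.
- destruct (Hxy y x) as [H1 H2]; auto; lia.
Qed.

Lemma nu_xor a b : nu (Nat.lxor a b) <= nu a + nu b /\ nu (Nat.lxor a b) <= Nat.max (nu a) (nu b) + 1.
Proof.
destruct (nu_attain (Nat.lxor a b)) as [H|[c H]]; [rewrite H; lia|].
rewrite H.
destruct (phi_sub c (w c a) (w c b) (w c (Nat.lxor a b)) (w_xor c a b)) as [H1 H2].
pose proof (nu_ge c a); pose proof (nu_ge c b); lia.
Qed.

Lemma nu_bit a p : Nat.testbit a p = true -> Aw (Nat.log2 (p + 1)) <= nu a.
Proof.
intros H. set (b := Nat.log2 (p + 1)).
pose proof (Nat.log2_spec (p + 1) ltac:(lia)) as [Hs1 Hs2]. fold b in Hs1, Hs2.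
rewrite Nat.pow_succ_r' in Hs2.
assert (Hw : 1 <= w b a).
{ unfold w. apply (cnt_pos _ _ (p + 1 - 2 ^ b)); [lia|].
  replace (2 ^ b - 1 + (p + 1 - 2 ^ b)) with p by lia. auto. }
pose proof (nu_ge b a). unfold phi in H0. destruct (Nat.eqb_spec (w b a) 0); [lia|]. lia.
Qed.

Lemma nu_zero a : nu a = 0 <-> a = 0.
Proof.
split.
- intros H. apply Nat.bits_inj_0. intros p. destruct (Nat.testbit a p) eqn:E; auto.
  pose proof (nu_bit a p E). unfold Aw in *; lia.
- intros ->. reflexivity.
Qed.

Lemma lt_of_bits g E : (forall p, E <= p -> Nat.testbit g p = false) -> g < 2 ^ E.
Proof.
intros H. destruct (Nat.eq_dec g 0) as [->|Hg]; [pose proof (Nat.pow_nonzero 2 E); lia|].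
destruct (Nat.lt_ge_cases g (2 ^ E)); auto.
pose proof (Nat.bit_log2 g Hg).
assert (E <= Nat.log2 g). { rewrite <- (Nat.log2_pow2 E) by lia. apply Nat.log2_le_mono; auto. }
rewrite H in H1 by auto. discriminate.
Qed.

Lemma bits_of_lt g E p : g < 2 ^ E -> E <= p -> Nat.testbit g p = false.
Proof.
intros H1 H2. destruct (Nat.eq_dec g 0) as [->|Hg]; [apply Nat.bits_0|].
apply Nat.bits_above_log2. apply Nat.log2_lt_pow2 in H1; lia.
Qed.

Lemma nu_proper R g : nu g <= R -> g < 2 ^ (2 ^ (2 ^ R)).
Proof.
intros H. apply lt_of_bits. intros p Hp. destruct (Nat.testbit g p) eqn:E; auto.
pose proof (nu_bit g p E) as Hb. unfold Aw in Hb.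
exfalso.
assert (Hl : Nat.log2 (p + 1) < 2 ^ R).
{ destruct (Nat.eq_dec (Nat.log2 (p + 1)) 0) as [->|Hne]; [pose proof (Nat.pow_nonzero 2 R); lia|].
  apply Nat.log2_lt_pow2; lia. }
assert (p + 1 < 2 ^ (2 ^ R)). { apply Nat.log2_lt_pow2; lia. }
lia.
Qed.

Fixpoint of_bits (f : nat -> bool) (L : nat) : nat :=
  match L with 0 => 0 | S L' => of_bits f L' + (if f L' then 2 ^ L' else 0) end.

Lemma of_bits_lt f L : of_bits f L < 2 ^ L.
Proof. induction L; simpl; [lia|]. destruct (f L); lia. Qed.

Lemma of_bits_spec f L p : Nat.testbit (of_bits f L) p = (p <? L) && f p.
Proof.
induction L; simpl.
- rewrite Nat.bits_0. destruct (Nat.ltb_spec p 0); [lia|]; auto.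
- destruct (f L) eqn:EfL.
  + rewrite Nat.add_nocarry_lxor.
    * rewrite Nat.lxor_spec, IHL, Nat.pow2_bits_eqb.
      destruct (Nat.ltb_spec p L), (Nat.ltb_spec p (S L)), (Nat.eqb_spec L p); subst; simpl; try lia; auto.
      all: rewrite ?EfL; try destruct (f p); auto.
    * apply Nat.bits_inj_0. intros n. rewrite Nat.land_spec, Nat.pow2_bits_eqb.
      destruct (Nat.eqb_spec L n); [subst|apply andb_false_r].
      rewrite (bits_of_lt _ n); auto. apply of_bits_lt.
  + rewrite Nat.add_0_r, IHL.
    destruct (Nat.ltb_spec p L), (Nat.ltb_spec p (S L)); simpl; try lia; auto.
    assert (p = L) by lia; subst; rewrite EfL; auto.
Qed.

Definition fcode (bb M : nat) (X : nat -> nat) (p : nat) : bool :=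
  let b := Nat.log2 (p + 1) in (bb <=? b) && (b <? bb + M) && (p + 1 - 2 ^ b <? X (b - bb)).
Definition code (bb M : nat) (X : nat -> nat) : nat := of_bits (fcode bb M X) (2 ^ (bb + M)).

Lemma log2_block b t : t < 2 ^ b -> Nat.log2 (2 ^ b - 1 + t + 1) = b.
Proof.
intros H. apply Nat.log2_unique; [lia|]. pose proof (Nat.pow_nonzero 2 b). rewrite Nat.pow_succ_r'. lia.
Qed.

Lemma code_bit bb M X b t : t < 2 ^ b ->
  Nat.testbit (code bb M X) (2 ^ b - 1 + t) = (bb <=? b) && (b <? bb + M) && (t <? X (b - bb)).
Proof.
intros Ht. unfold code. rewrite of_bits_spec. unfold fcode. rewrite log2_block by auto.
replace (2 ^ b - 1 + t + 1 - 2 ^ b) with t by (pose proof (Nat.pow_nonzero 2 b); lia).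
destruct (Nat.leb_spec bb b), (Nat.ltb_spec b (bb + M)); simpl; try (rewrite andb_false_r; auto); auto.
replace (2 ^ b - 1 + t <? 2 ^ (bb + M)) with true; auto.
symmetry; apply Nat.ltb_lt.
assert (2 ^ S b <= 2 ^ (bb + M)) by (apply Nat.pow_le_mono_r; lia).
rewrite Nat.pow_succ_r' in H1. lia.
Qed.

Lemma w_code_in bb M X Y i : i < M -> X i <= 2 ^ bb -> Y i <= 2 ^ bb ->
  w (bb + i) (Nat.lxor (code bb M X) (code bb M Y)) = Nat.max (X i) (Y i) - Nat.min (X i) (Y i).
Proof.
intros Hi HX HY. unfold w.
rewrite (cnt_ext _ (fun t => xorb (t <? X i) (t <? Y i))).
- rewrite cnt_xlt. assert (2 ^ bb <= 2 ^ (bb + i)) by (apply Nat.pow_le_mono_r; lia).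
  rewrite (Nat.min_l (X i)), (Nat.min_l (Y i)) by lia. lia.
- intros t Ht. rewrite Nat.lxor_spec, !code_bit by auto.
  replace (bb + i - bb) with i by lia.
  replace (bb <=? bb + i) with true by (symmetry; apply Nat.leb_le; lia).
  replace (bb + i <? bb + M) with true by (symmetry; apply Nat.ltb_lt; lia). auto.
Qed.

Lemma w_code_out bb M X Y b : (b < bb \/ bb + M <= b) ->
  w b (Nat.lxor (code bb M X) (code bb M Y)) = 0.
Proof.
intros Hb. unfold w. apply cnt_false. intros t Ht. rewrite Nat.lxor_spec, !code_bit by auto.
destruct Hb.
- replace (bb <=? b) with false by (symmetry; apply Nat.leb_gt; lia). auto.
- replace (b <? bb + M) with false by (symmetry; apply Nat.ltb_ge; lia). rewrite !andb_false_r; auto.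
Qed.

Lemma nu_code_small bb M X Y :
  (forall i, i < M -> X i <= 2 ^ bb /\ Y i <= 2 ^ bb /\ X i <= Y i + 1 /\ Y i <= X i + 1) ->
  nu (Nat.lxor (code bb M X) (code bb M Y)) <= Aw (bb + M).
Proof.
intros H. destruct (nu_attain (Nat.lxor (code bb M X) (code bb M Y))) as [E|[b E]]; rewrite E; [lia|].
destruct (Nat.lt_ge_cases b bb); [rewrite w_code_out by lia; unfold phi; simpl; lia|].
destruct (Nat.lt_ge_cases b (bb + M)); [|rewrite w_code_out by lia; unfold phi; simpl; lia].
replace b with (bb + (b - bb)) by lia.
destruct (H (b - bb) ltac:(lia)) as [K1 [K2 [K3 K4]]].
rewrite w_code_in by (auto; lia).
assert (Hm : Nat.max (X (b - bb)) (Y (b - bb)) - Nat.min (X (b - bb)) (Y (b - bb)) <= 1) by lia.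
unfold phi. destruct (_ =? 0); [lia|].
assert (H5 : Nat.log2 (Nat.max (X (b - bb)) (Y (b - bb)) - Nat.min (X (b - bb)) (Y (b - bb))) <= Nat.log2 1) by (apply Nat.log2_le_mono; auto).
change (Nat.log2 1) with 0 in H5. unfold Aw. pose proof (Nat.log2_le_mono (bb + (b - bb)) (bb + M) ltac:(lia)). lia.
Qed.

Lemma nu_code_far bb M X Y i : i < M -> X i = 2 ^ bb -> Y i = 0 ->
  bb + 1 <= nu (Nat.lxor (code bb M X) (code bb M Y)).
Proof.
intros Hi HX HY. pose proof (nu_ge (bb + i) (Nat.lxor (code bb M X) (code bb M Y))).
rewrite w_code_in in H by lia. rewrite HX, HY in H.
replace (Nat.max (2 ^ bb) 0 - Nat.min (2 ^ bb) 0) with (2 ^ bb) in H by lia.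
unfold phi in H. destruct (Nat.eqb_spec (2 ^ bb) 0); [pose proof (Nat.pow_nonzero 2 bb); lia|].
rewrite Nat.log2_pow2 in H by lia. unfold Aw in H. lia.
Qed.
From Stdlib Require Import Reals Lra List Arith Lia Bool.
Open Scope R_scope.

Definition dK (x y : nat) : R := INR (nu (Nat.lxor x y)).

Lemma nat_gt (r : R) : exists n : nat, r < INR n.
Proof. destruct (INR_archimed 1 r ltac:(lra)) as [n Hn]. exists n; lra. Qed.

Lemma grp : is_group Nat.lxor 0%nat (fun x => x).
Proof.
repeat split; intros.
- apply Nat.lxor_assoc.
- apply Nat.lxor_0_l.
- apply Nat.lxor_0_r.
- apply Nat.lxor_nilpotent.
- apply Nat.lxor_nilpotent.
Qed.

Lemma lxor_lt a b E : (a < 2 ^ E)%nat -> (b < 2 ^ E)%nat -> (Nat.lxor a b < 2 ^ E)%nat.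
Proof.
intros Ha Hb. apply lt_of_bits. intros p Hp. rewrite Nat.lxor_spec, !(bits_of_lt _ E) by auto. auto.
Qed.

Lemma in_le_sum x S : In x S -> (x <= fold_right Nat.add 0%nat S)%nat.
Proof. induction S; simpl; intros H; [contradiction|]. destruct H as [->|H]; [lia|]. specialize (IHS H); lia. Qed.

Lemma locfin : locally_finite Nat.lxor 0%nat (fun x => x).
Proof.
intros S. set (B := fold_right Nat.add 0%nat S).
exists (seq 0 (2 ^ B)). intros x Hx. apply in_seq.
cut (x < 2 ^ B)%nat; [lia|].
induction Hx.
- pose proof (in_le_sum x S H). pose proof (Nat.pow_gt_lin_r 2 B ltac:(lia)). lia.
- pose proof (Nat.pow_nonzero 2 B); lia.
- auto.
- apply lxor_lt; auto.
Qed.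

Lemma lxor_3 x y z : Nat.lxor x z = Nat.lxor (Nat.lxor x y) (Nat.lxor y z).
Proof. rewrite Nat.lxor_assoc, <- (Nat.lxor_assoc y y z), Nat.lxor_nilpotent, Nat.lxor_0_l. auto. Qed.

Lemma metric : proper_left_invariant_metric Nat.lxor 0%nat dK.
Proof.
split; [|split].
- unfold dK; repeat split.
  + intros; apply pos_INR.
  + intros H. apply Nat.lxor_eq_0_iff, nu_zero. apply INR_eq. rewrite H; simpl; auto.
  + intros ->. rewrite Nat.lxor_nilpotent. reflexivity.
  + intros. rewrite Nat.lxor_comm; auto.
  + intros x y z. rewrite (lxor_3 x y z), <- plus_INR. apply le_INR. apply nu_xor.
- intros g h k. unfold dK. f_equal. f_equal.
  rewrite (Nat.lxor_comm g h), Nat.lxor_assoc, <- (Nat.lxor_assoc g g k), Nat.lxor_nilpotent, Nat.lxor_0_l. auto.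
- intros r Hr. destruct (nat_gt r) as [R HR].
  exists (seq 0 (2 ^ (2 ^ (2 ^ R)))). intros g Hg. apply in_seq.
  cut (g < 2 ^ (2 ^ (2 ^ R)))%nat; [lia|]. apply nu_proper.
  unfold dK in Hg. rewrite Nat.lxor_0_l in Hg. apply INR_le. lra.
Qed.

Lemma near_ultra x y z : dK x y <= Rmax (dK x z) (dK y z) + 1.
Proof.
unfold dK. rewrite (lxor_3 x z y), (Nat.lxor_comm z y).
destruct (nu_xor (Nat.lxor x z) (Nat.lxor y z)) as [_ H].
apply le_INR in H. rewrite plus_INR in H. simpl in H.
destruct (Nat.max_spec (nu (Nat.lxor x z)) (nu (Nat.lxor y z))) as [[H1 H2]|[H1 H2]]; rewrite H2 in H.
- apply lt_INR in H1. rewrite Rmax_right by lra. lra.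
- apply le_INR in H1. rewrite Rmax_left by lra. lra.
Qed.

Lemma uf_nonempty w (A : nat -> Prop) : ultrafilter w -> w A -> exists n, A n.
Proof.
intros [_ [H0 [Hup _]]] HA. apply Classical_Prop.NNPP. intros Hn.
apply H0. apply (Hup A); auto. intros n Hn'. apply Hn. exists n; auto.
Qed.

Lemma cones : all_cones_ultrametric dK.
Proof.
intros w Hw Hnp c dn Hdn Hinf x y z _ _ _ Lxy Lxz Lyz Hxy Hxz Hyz.
apply Rnot_lt_le. intros Hlt.
set (m := Rmax Lxz Lyz) in *.
set (eps := (Lxy - m) / 4).
assert (Heps : eps > 0) by (unfold eps; lra).
assert (Heq : Lxy = m + 4 * eps) by (unfold eps; lra).
destruct Hw as [HT [HF [Hup [Hcap Hult]]]].
assert (HW : w (fun n => (Rabs (dK (x n) (y n) / dn n - Lxy) < eps /\ Rabs (dK (x n) (z n) / dn n - Lxz) < eps) /\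
   (Rabs (dK (y n) (z n) / dn n - Lyz) < eps /\ dn n > / eps))).
{ apply Hcap; apply Hcap; auto. }
destruct (uf_nonempty w _ (conj HT (conj HF (conj Hup (conj Hcap Hult)))) HW) as [n [[H1 H2] [H3 H4]]].
pose proof (Hdn n) as Hd.
pose proof (near_ultra (x n) (y n) (z n)) as Hu.
apply Rabs_def2 in H1; apply Rabs_def2 in H2; apply Rabs_def2 in H3.
assert (Hinv : / dn n < eps).
{ rewrite <- (Rinv_inv eps). apply Rinv_lt_contravar; [apply Rmult_lt_0_compat; auto; apply Rinv_0_lt_compat; auto|]. lra. }
assert (Hm1 : Lxz <= m) by apply Rmax_l.
assert (Hm2 : Lyz <= m) by apply Rmax_r.
assert (Hdiv : dK (x n) (y n) / dn n <= Rmax (dK (x n) (z n)) (dK (y n) (z n)) / dn n + / dn n).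
{ apply Rle_trans with ((Rmax (dK (x n) (z n)) (dK (y n) (z n)) + 1) / dn n).
  - unfold Rdiv; apply Rmult_le_compat_r; [left; apply Rinv_0_lt_compat; auto| exact Hu].
  - right; field; lra. }
destruct (Rle_dec (dK (x n) (z n)) (dK (y n) (z n))).
- rewrite Rmax_right in Hdiv by auto. lra.
- rewrite Rmax_left in Hdiv by lra. lra.
Qed.

Lemma exp_big (K : nat) : (K * (2 * (2 * K + 4) + 4) < 2 ^ (2 * (2 * K + 4)))%nat.
Proof.
pose proof (Nat.pow_gt_lin_r 2 (2 * K + 4) ltac:(lia)) as H.
replace (2 * (2 * K + 4))%nat with ((2 * K + 4) + (2 * K + 4))%nat by lia.
rewrite Nat.pow_add_r. set (a := (2 ^ (2 * K + 4))%nat) in *. nia.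
Qed.

Lemma choose_e (C k : R) (n : nat) : C > 0 ->
  exists e : nat, (S n <= 2 ^ e)%nat /\ C * INR (e + 3) + k < INR (2 ^ e + 1).
Proof.
intros HC. destruct (nat_gt (C + Rabs k + INR n + 1)) as [K HK].
pose proof (Rle_abs k). pose proof (pos_INR n). pose proof (Rabs_pos k).
exists (2 * (2 * K + 4))%nat. split.
- assert (HnK : INR n < INR K) by lra. apply INR_lt in HnK.
  pose proof (Nat.pow_gt_lin_r 2 (2 * (2 * K + 4)) ltac:(lia)). lia.
- pose proof (exp_big K) as HE. set (E := (2 * (2 * K + 4))%nat) in *.
  replace (2 * (2 * K + 4) + 4)%nat with (E + 4)%nat in HE by (unfold E; lia).
  apply lt_INR in HE. rewrite mult_INR, plus_INR in HE.
  rewrite !plus_INR. replace (INR 4) with 4 in HE by (simpl; lra). replace (INR 3) with 3 by (simpl; lra). replace (INR 1) with 1 by (simpl; lra).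
  pose proof (pos_INR E).
  assert (HCK : C * (INR E + 3) <= INR K * (INR E + 3)).
  { apply Rmult_le_compat_r; lra. }
  lra.
Qed.

Lemma Aw_bound e M : (M <= 2 ^ e)%nat -> (Aw (2 ^ e + M) <= e + 2)%nat.
Proof.
intros H. unfold Aw.
assert (Nat.log2 (2 ^ e + M) <= Nat.log2 (2 ^ S e))%nat by (apply Nat.log2_le_mono; rewrite Nat.pow_succ_r'; lia).
rewrite Nat.log2_pow2 in H0 by lia. lia.
Qed.
From mathcomp Require Import all_boot all_fingroup.
From Stdlib Require Import Lia FunctionalExtensionality ClassicalEpsilon Classical.
Module SpM.
Set Implicit Arguments. Unset Strict Implicit. Unset Printing Implicit Defensive.
Open Scope nat_scope.
Ltac ssr2coq := repeat match goal with
 | H : is_true (?a <= ?b) |- _ => let H' := fresh "H" in have H' := elimT leP H; clear H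
 | H : (?a <= ?b) = false |- _ => let H' := fresh "H" in have H' := elimF leP H; clear H
 | H : (?a <= ?b) = true |- _ => let H' := fresh "H" in have H' := elimT leP H; clear H
 | H : is_true (?a == ?b) |- _ => let H' := fresh "H" in have H' := elimT eqP H; clear H
 | H : (?a == ?b) = false |- _ => let H' := fresh "H" in have H' := elimF eqP H; clear H
 end; try unfold addn, addn_rec in *; try unfold subn, subn_rec in *; try unfold muln, muln_rec in *.

Lemma odd_sum (I : finType) (P : pred I) (F : I -> nat) :
  odd (\sum_(i | P i) F i) = \big[addb/false]_(i | P i) odd (F i).
Proof. by apply: (big_morph odd oddD). Qed.

Lemma even_invol (T : finType) (P : pred T) (g : T -> T) (F : T -> nat) :
  (forall x, P x -> P (g x)) -> (forall x, P x -> g (g x) = x) ->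
  (forall x, P x -> g x != x) -> (forall x, P x -> F (g x) = F x) ->
  ~~ odd (\sum_(x | P x) F x).
Proof.
move=> HP Hgg Hne HF.
pose Q x := enum_rank x < enum_rank (g x).
rewrite (bigID Q) /=.
have -> : \sum_(i | P i && ~~ Q i) F i = \sum_(i | P i && Q i) F i.
  rewrite (reindex_onto g g); last first.
    by move=> i /andP [Pi _]; apply: Hgg.
  apply: eq_big => y.
  - case Py: (P y); rewrite /=.
    + rewrite HP // Hgg // eqxx andbT /Q Hgg //= -leqNgt leq_eqVlt.
      case: eqP => [E|//]; exfalso.
      have E' : enum_rank y = enum_rank (g y) by first [exact: ord_inj E | exact E].
      move/enum_rank_inj: E' => E''; move: (Hne y Py); by rewrite -E'' eqxx.
    + apply/negP => /andP [/andP [Pgy _] /eqP E].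
      by move: (HP _ Pgy); rewrite E Py.
  - move=> /andP [/andP [Pgy _] /eqP E]; symmetry; rewrite -{1}E; exact: HF.
by rewrite addnn odd_double.
Qed.

Lemma sum_bij (T : finType) (A B : pred T) (phi psi : T -> T) (F : T -> nat) :
  (forall x, A x -> B (phi x)) -> (forall y, B y -> A (psi y)) ->
  (forall x, A x -> psi (phi x) = x) -> (forall y, B y -> phi (psi y) = y) ->
  \sum_(x | A x) F (phi x) = \sum_(y | B y) F y.
Proof.
move=> HAB HBA Hpp Hpp'.
rewrite [RHS](reindex_onto phi psi) //. symmetry.
apply: eq_bigl => x; apply/idP/idP.
- by move=> /andP [Bx /eqP E]; rewrite -E HBA.
- by move=> Ax; rewrite HAB // Hpp // eqxx.
Qed.
Lemma sum_b2n_card n (P : pred 'I_n) : \sum_(k < n) (P k : nat) = #|P|.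
Proof.
rewrite -sum1_card [RHS]big_mkcond /=; apply: eq_bigr => k _; by rewrite unfold_in; case: (P k).
Qed.

Section Local.
Variables (d : nat) (l : nat -> nat).
Hypothesis Hl : forall j, j <= d -> l j <= d.

Definition door (k : nat) := [forall a : 'I_d, [exists j : 'I_d.+1, (j != k :> nat) && (l j == a)]].
Definition FLb := [forall a : 'I_d.+1, [exists j : 'I_d.+1, l j == a]].

Definition f (j : 'I_d.+1) : 'I_d.+1 := inord (l j).
Lemma fE j : (f j : nat) = l j.
Proof. by rewrite /f inordK // ltnS Hl // -ltnS. Qed.

Lemma local_parity : odd (\sum_(k < d.+1) door k) = FLb.
Proof.
rewrite (sum_b2n_card (fun k : 'I_d.+1 => door k)).
case: (boolP FLb) => HF.
- have surj : forall y, exists x, f x = y.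
    move=> y; move/forallP: HF => /(_ y) /existsP [x /eqP Hx]; exists x.
    by apply: ord_inj; rewrite fE.
  have inj : injective f.
    have Him : f @: setT = setT.
      apply/setP => y; rewrite !inE; case: (surj y) => x <-.
      by apply: imset_f; rewrite inE.
    have: #|f @: setT| == #|[set: 'I_d.+1]| by rewrite Him.
    move/imset_injP => H x y Hxy; apply: H => //; by rewrite inE.
  case: (surj ord_max) => k0 Hk0.
  rewrite (@eq_card _ _ (pred1 k0)); first by rewrite card1.
    move=> k; rewrite !inE; apply/idP/idP.
    + move/forallP => Hd; apply/negPn/negP => Hne.
      have Hlt : l k < d.
        rewrite -fE ltn_neqAle -ltnS ltn_ord andbT.
        apply/negP => /eqP Heq.
        have : f k = f k0 by apply: ord_inj; rewrite Heq Hk0.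
        by move/inj => E; rewrite E eqxx in Hne.
      move: (Hd (Ordinal Hlt)) => /existsP [j /andP [Hjk /eqP Hj]].
      have : f j = f k by apply: ord_inj; rewrite !fE Hj.
      by move/inj => E; rewrite E eqxx in Hjk.
    + move/eqP => ->; apply/forallP => a.
      have Ha : a < d.+1 by apply: (leq_trans (ltn_ord a)).
      case: (surj (Ordinal Ha)) => j Hj; apply/existsP; exists j.
      apply/andP; split.
      * apply/negP => /eqP /val_inj E; move: Hj; rewrite E Hk0 => /(congr1 val) /=.
        by move=> Hd; move: (ltn_ord a); rewrite -Hd ltnn.
      * by rewrite -fE Hj.
- have HF2 : ~~ [forall a : 'I_d.+1, [exists j : 'I_d.+1, l j == a]] := HF.
  case/forallPn: HF2 => amiss Hmiss.
  case: (boolP [exists k : 'I_d.+1, door k]) => Hex; last first.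
    rewrite (@eq_card _ _ (@pred0 'I_d.+1)); first by rewrite card0.
    move=> k; rewrite !inE; apply/negP => Hk; move/negP: Hex; apply.
    by apply/existsP; exists k.
  case/existsP: Hex => k0 Hk0.
  have Hnd : forall j : 'I_d.+1, l j < d.
    move=> j; have := ltn_ord (f j); rewrite fE ltnS leq_eqVlt => /orP [/eqP Hj|//].
    exfalso; move/negP: Hmiss; apply; apply/existsP.
    have Ham : amiss < d.+1 := ltn_ord amiss.
    case: (ltngtP amiss d) => Hc.
    + move/forallP: Hk0 => /(_ (Ordinal Hc)) /existsP [j' /andP [_ Hj']].
      by exists j'.
    + by move: Ham; rewrite ltnS leqNgt Hc.
    + by exists j; rewrite Hj Hc.
  have Hk0d := Hnd k0.
  move/forallP: (Hk0) => /(_ (Ordinal Hk0d)) /existsP [j0 /andP [Hj0k0 /eqP Hj0]].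
  pose A := [set~ k0].
  have injA : {in A &, injective f}.
    apply/imset_injP; rewrite eqn_leq leq_imset_card /=.
    rewrite cardsC1 card_ord /=.
    have Hsub : [set~ (@ord_max d)] \subset f @: A.
      apply/subsetP => y; rewrite !inE => Hy.
      have Hyd : y < d.
        have := ltn_ord y; rewrite ltnS leq_eqVlt => /orP [/eqP E|//].
        by exfalso; move/negP: Hy; apply; apply/eqP/ord_inj.
      move/forallP: Hk0 => /(_ (Ordinal Hyd)) /existsP [j /andP [Hjk /eqP Hj]].
      apply/imsetP; exists j; first by rewrite !inE.
      by apply: ord_inj; rewrite fE Hj.
    by move: (subset_leq_card Hsub); rewrite cardsC1 card_ord.
  have Hne : k0 != j0 by rewrite eq_sym; apply/negP => /eqP E; rewrite E eqxx in Hj0k0.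
  rewrite (@eq_card _ _ [set k0; j0]); first by rewrite cards2 Hne.
    move=> k; rewrite !inE; apply/idP/idP.
    + move/forallP => Hd; apply/negPn/negP; rewrite negb_or => /andP [Hkk0 Hkj0].
      move: (Hd (Ordinal (Hnd k))) => /existsP [j /andP [Hjk /eqP Hj]].
      case: (eqVneq j k0) => Ejk0.
      * subst j.
        have : f k = f j0 by apply: ord_inj; rewrite !fE; simpl in Hj0, Hj; by rewrite Hj0 -Hj.
        move/injA; rewrite !inE Hkk0 eq_sym Hne => /(_ isT isT) E.
        by rewrite E eqxx in Hkj0.
      * have : f j = f k by apply: ord_inj; rewrite !fE Hj.
        move/injA; rewrite !inE Ejk0 Hkk0 => /(_ isT isT) E.
        by rewrite E eqxx in Hjk.
    + case/orP => /eqP ->; first by [].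
      apply/forallP => a.
      move/forallP: Hk0 => /(_ a) /existsP [j /andP [Hjk /eqP Hj]].
      apply/existsP; case: (eqVneq j j0) => Ejj0.
      * exists k0; apply/andP; split; first by [].
        by rewrite -Hj Ejj0 Hj0 /=.
      * exists j; rewrite Hj eqxx andbT. by [].
Qed.
End Local.

Lemma door_ext d l l' (k : nat) : (forall j, j <= d -> j != k -> l j = l' j) -> door d l k = door d l' k.
Proof.
move=> H; apply: eq_forallb => a; apply: eq_existsb => j.
case: (eqVneq (j : nat) k) => //= Hj; rewrite H // -ltnS; exact: ltn_ord.
Qed.

Section Sperner.
Variables (m0 n0 : nat) (lam : ('I_m0.+1 -> nat) -> nat).
Local Notation M := m0.+1.
Local Notation N := n0.+1.
Definition board (x : 'I_M -> nat) := forall i, x i <= N.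
Hypothesis HL : forall x, lam x <= M.
Hypothesis Ha : forall x (i : 'I_M), x i = 0 -> lam x <> i.+1.
Hypothesis Hb : forall x (i : 'I_M), board x -> x i = N -> lam x <> 0.

Definition simp := ({ffun 'I_M -> 'I_N} * {perm 'I_M})%type.
Definition vtx (p : simp) (k : nat) : 'I_M -> nat := fun i => p.1 i + (p.2 i < k).
Definition lab (p : simp) (j : nat) := lam (vtx p j).
Definition valid d (p : simp) :=
  [forall i : 'I_M, (d <= i) ==> ((p.1 i == 0 :> nat) && (p.2 i == i :> nat))].
Definition S d := \sum_(p | valid d p) FLb d (lab p).

Lemma vtx_board p k : board (vtx p k).
Proof. move=> i; rewrite /vtx; have := ltn_ord (p.1 i); case: (_ < k); rewrite ?addn1 ?addn0 //; exact: ltnW. Qed.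

Lemma lab_le d p j : valid d p -> j <= d -> lab p j <= d.
Proof.
move=> /forallP Hv Hj; rewrite /lab.
have Hz : forall i : 'I_M, d <= i -> vtx p j i = 0.
  move=> i Hi; move: (Hv i); rewrite Hi /= => /andP [/eqP H1 /eqP H2].
  rewrite /vtx H1 H2 add0n; apply/eqP; rewrite eqb0 -leqNgt; exact: leq_trans Hj Hi.
rewrite leqNgt; apply/negP => Hlt.
move: Hlt (HL (vtx p j)) (Ha (x := vtx p j)).
case: (lam (vtx p j)) => [//|n] Hlt HLn Han.
have HnM : n < M by exact: HLn.
apply: (Han (Ordinal HnM)) => //.
by apply: Hz.
Qed.

Lemma S0_odd : odd (S 0).
Proof.
pose p0 : simp := ([ffun => ord0], 1%g).
have Hv : valid 0 p0 by apply/forallP => i; rewrite /= ffunE perm1 !eqxx.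
rewrite /S (big_pred1 p0); last first.
  move=> p; rewrite /=; apply/idP/idP; last by move/eqP ->.
  move/forallP => H; apply/eqP; case: p H => b q /= H.
  have Hb0 : b = [ffun => ord0].
    apply/ffunP => i; rewrite ffunE; apply: ord_inj; move: (H i) => /= /andP [/eqP -> _]; by [].
  have Hq1 : q = 1%g.
    apply/permP => i; rewrite perm1; apply: ord_inj; move: (H i) => /= /andP [_ /eqP ->]; by [].
  by rewrite Hb0 Hq1.
suff -> : FLb 0 (lab p0) by [].
apply/forallP => a; apply/existsP; exists ord0.
have := lab_le Hv (leqnn 0); rewrite leqn0 => /eqP ->.
by case: a => [[]].
Qed.

Section Step.
Variable d : nat.
Hypothesis Hd : d <= m0.
Local Notation D := d.+1.

Lemma HdM : d < M. Proof. by rewrite ltnS. Qed.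

Definition cf (v : 'I_M) : 'I_M :=
  if (v == 0 :> nat) then inord d else if v <= d then inord v.-1 else v.

Lemma cfE v : (cf v : nat) = if (v == 0 :> nat) then d else if v <= d then v.-1 else v.
Proof.
rewrite /cf; case: eqP => _; first by rewrite inordK // HdM.
case: ifP => // Hv; rewrite inordK //; apply: leq_ltn_trans (leq_pred _) (leq_ltn_trans Hv HdM).
Qed.

Lemma cf_inj : injective cf.
Proof.
move=> u v E; apply: ord_inj; move: (congr1 val E); rewrite /= !cfE.
case: eqP => H1; case: eqP => H2; try case: ifP => H3; try case: ifP => H4; move=> H5;
 ssr2coq; lia.
Qed.

Definition c : {perm 'I_M} := perm cf_inj.
Lemma cE v : (c v : nat) = if (v == 0 :> nat) then d else if v <= d then v.-1 else v.
Proof. by rewrite /c permE cfE. Qed.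

Lemma c_fix (v : 'I_M) : d < v -> c v = v.
Proof. move=> Hv; apply: ord_inj; rewrite cE; case: eqP => [E|_]; first by rewrite E in Hv.
by rewrite leqNgt Hv. Qed.

Lemma c_d (v : 'I_M) : (c v == d :> nat) = (v == 0 :> nat).
Proof.
rewrite cE; case: (eqP (x := v : nat)) => H1; first by rewrite eqxx.
case: ifP => H2; apply/eqP => H3; ssr2coq; lia.
Qed.

Lemma cV_fix (v : 'I_M) : d < v -> (c^-1)%g v = v.
Proof. move=> Hv; apply: (perm_inj (s := c)); rewrite permKV c_fix //. Qed.

Lemma cV_0 (w : 'I_M) : ((c^-1)%g w == 0 :> nat) = (w == d :> nat).
Proof. by rewrite -{2}(permKV c w) c_d. Qed.

Definition i0 (p : simp) : 'I_M := (p.2^-1)%g (inord 0).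
Definition i1 (p : simp) : 'I_M := (p.2^-1)%g (inord d).
Lemma q_i0 (p : simp) : (p.2 (i0 p) : nat) = 0.
Proof. by rewrite /i0 permKV inordK. Qed.
Lemma q_i1 (p : simp) : (p.2 (i1 p) : nat) = d.
Proof. by rewrite /i1 permKV inordK // HdM. Qed.
Lemma q_eq0 (p : simp) (x : 'I_M) : (p.2 x == 0 :> nat) = (x == i0 p).
Proof.
apply/eqP/eqP => [H|->]; last exact: q_i0.
apply: (perm_inj (s := p.2)); apply: ord_inj; by rewrite H q_i0.
Qed.
Lemma q_eqd (p : simp) (x : 'I_M) : (p.2 x == d :> nat) = (x == i1 p).
Proof.
apply/eqP/eqP => [H|->]; last exact: q_i1.
apply: (perm_inj (s := p.2)); apply: ord_inj; by rewrite H q_i1.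
Qed.

Definition up (p : simp) := (p.1 (i0 p) == n0 :> nat).
Definition low (p : simp) := (p.1 (i1 p) == 0 :> nat).

Definition phi (p : simp) : simp :=
  ([ffun x => inord (p.1 x + (p.2 x == 0 :> nat))], (p.2 * c)%g).
Definition psi (p : simp) : simp :=
  ([ffun x => inord (p.1 x - (p.2 x == d :> nat))], (p.2 * c^-1)%g).

Lemma validP d' (p : simp) : reflect (forall x : 'I_M, d' <= x -> (p.1 x : nat) = 0 /\ (p.2 x : nat) = x) (valid d' p).
Proof.
apply: (iffP forallP) => H x.
- move=> Hx; move: (H x); rewrite Hx /= => /andP [/eqP -> /eqP ->]; by [].
- apply/implyP => Hx; case: (H x Hx) => -> ->; by rewrite !eqxx.
Qed.

Definition A (p : simp) := valid D p && ~~ up p.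
Definition B (p : simp) := valid D p && ~~ low p.

Lemma phi1 (p : simp) (x : 'I_M) : A p -> ((phi p).1 x : nat) = p.1 x + (p.2 x == 0 :> nat).
Proof.
move=> /andP [_ Hup]; rewrite ffunE inordK //.
case: eqP => H; last by rewrite addn0; exact: ltn_ord.
rewrite addn1 ltnS.
have Hx : x = i0 p by apply/eqP; rewrite -q_eq0 H.
subst x; rewrite ltn_neqAle Hup /=; have := ltn_ord (p.1 (i0 p)); by rewrite ltnS.
Qed.

Lemma psi1 (p : simp) (x : 'I_M) : ((psi p).1 x : nat) = p.1 x - (p.2 x == d :> nat).
Proof. rewrite ffunE inordK //; apply: leq_ltn_trans (leq_subr _ _) (ltn_ord _). Qed.

Lemma phi_i1 (p : simp) : i1 (phi p) = i0 p.
Proof.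
rewrite /i1; apply: (perm_inj (s := (phi p).2)); rewrite permKV /= permM.
apply: ord_inj; by rewrite cE q_i0 /= inordK // HdM.
Qed.

Lemma psi_i0 (p : simp) : i0 (psi p) = i1 p.
Proof.
rewrite /i0; apply: (perm_inj (s := (psi p).2)); rewrite permKV /= permM.
apply: ord_inj; rewrite inordK //; apply/eqP; by rewrite eq_sym cV_0 q_i1.
Qed.

Lemma AB (p : simp) : A p -> B (phi p).
Proof.
move=> HA; have HA' := HA; move: HA' => /andP [/validP Hv Hup].
apply/andP; split.
- apply/validP => x Hx; rewrite phi1 //; case: (Hv x Hx) => H1 H2; rewrite H1 H2 /=.
  split; first by case: x Hx {H1 H2} => [[|x]].
  by rewrite permM (_ : p.2 x = x) ?c_fix //; apply: ord_inj.
- by rewrite /low phi_i1 phi1 // q_i0 eqxx addn1.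
Qed.

Lemma BA (p : simp) : B p -> A (psi p).
Proof.
move=> /andP [/validP Hv Hlow]; apply/andP; split.
- apply/validP => x Hx; rewrite psi1; case: (Hv x Hx) => H1 H2; rewrite H1 H2 /=.
  split; first by [].
  by rewrite permM (_ : p.2 x = x) ?cV_fix //; apply: ord_inj.
- rewrite /up psi_i0 psi1 q_i1 eqxx subn1.
  have := ltn_ord (p.1 (i1 p)); rewrite ltnS.
  move: Hlow; rewrite /low; case: (p.1 (i1 p) : nat) => // n _ Hn.
  by rewrite /= neq_ltn Hn.
Qed.

Lemma psi_phi (p : simp) : A p -> psi (phi p) = p.
Proof.
move=> HA; case: p HA => b q HA; congr pair.
- apply/ffunP => x; apply: ord_inj; rewrite psi1 phi1 //= permM c_d addnK; by [].
- by rewrite /= mulgK.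
Qed.

Lemma phi_psi (p : simp) : B p -> phi (psi p) = p.
Proof.
move=> HB; have HA := BA HB; case: p HB HA => b q HB HA; congr pair.
- apply/ffunP => x; apply: ord_inj; rewrite phi1 // psi1 /= permM cV_0.
  case: eqP => Hx; last by rewrite subn0 addn0. rewrite subn1 addn1 prednK //.
  have Hx' : x = i1 (b, q) by apply/eqP; rewrite -q_eqd; apply/eqP.
  move: HB => /andP [_]; rewrite /low Hx' /=; by rewrite lt0n.
- by rewrite /= mulgKV.
Qed.


Lemma vtx_phi (p : simp) j : A p -> j <= d -> vtx (phi p) j = vtx p j.+1.
Proof.
move=> HA Hj; apply: functional_extensionality => x; rewrite /vtx phi1 //= permM cE -addnA; congr addn.
case: eqP => H1.
  by rewrite H1 /= ltnNge Hj.
case: ifP => H2 /=.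
  rewrite add0n; case: (p.2 x : nat) H1 H2 => [//|v] _ _ /=; by [].
have H4 : d < p.2 x by rewrite ltnNge H2.
by rewrite add0n ltnNge (leq_trans Hj (ltnW H4)) ltnS leqNgt (leq_ltn_trans Hj H4).
Qed.

Lemma door_phi (p : simp) : A p -> door D (lab (phi p)) D = door D (lab p) 0.
Proof.
move=> HA; apply: eq_forallb => a; apply/existsP/existsP => [[j /andP [Hj /eqP Ha']]|[j /andP [Hj /eqP Ha']]].
- have Hjd : j <= d by have := ltn_ord j; rewrite ltnS leq_eqVlt (negbTE Hj).
  have Hj1 : j.+1 < D.+1 by rewrite ltnS.
  exists (Ordinal Hj1); rewrite /= -Ha' /lab vtx_phi //=; by rewrite eqxx.
- have Hj0 : 0 < j by rewrite lt0n.
  have Hj1 : j.-1 < D.+1 by apply: leq_ltn_trans (leq_pred _) (ltn_ord _).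
  exists (Ordinal Hj1) => /=.
  have Hjd : j.-1 <= d by have := ltn_ord j; rewrite -(prednK Hj0) ltnS ltnS.
  apply/andP; split.
    apply/negP => /eqP E; move: (ltn_ord j); by rewrite -(prednK Hj0) E ltnn.
  by rewrite -Ha' /lab vtx_phi // prednK.
Qed.

Lemma up_door (p : simp) : valid D p -> up p -> door D (lab p) 0 = false.
Proof.
move=> Hv Hup; apply/negP => /forallP /(_ ord0) /existsP [j /andP [Hj /eqP Hl]].
apply: (Hb (i := i0 p) (vtx_board p j)) Hl.
rewrite /vtx q_i0 (eqP Hup) lt0n Hj; by rewrite addn1.
Qed.

Lemma i1_lt (p : simp) : valid D p -> i1 p < D.
Proof.
move/validP => Hv; rewrite ltnNge; apply/negP => H.
case: (Hv _ H) => _; rewrite q_i1 => E; move: H; by rewrite -E ltnn.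
Qed.

Lemma low_door (p : simp) : valid D p -> low p -> (i1 p != d :> nat) -> door D (lab p) D = false.
Proof.
move=> Hv Hlow Hne.
have Hlt : (i1 p).+1 < D.
  have := i1_lt Hv; rewrite ltnS leq_eqVlt (negbTE Hne); by [].
apply/negP => /forallP /(_ (Ordinal Hlt)) /existsP [j /andP [Hj /eqP Hl]].
apply: (Ha (i := i1 p)) Hl.
rewrite /vtx q_i1 (eqP Hlow) add0n; apply/eqP; rewrite eqb0 -leqNgt.
by have := ltn_ord j; rewrite ltnS leq_eqVlt (negbTE Hj).
Qed.

Lemma low_valid (p : simp) : [&& valid D p, low p & (i1 p == d :> nat)] = valid d p.
Proof.
apply/idP/idP.
- move=> /and3P [/validP Hv Hlow /eqP Hi]; apply/validP => x Hx.
  move: Hx; rewrite leq_eqVlt => /orP [/eqP Hx|Hx]; last exact: Hv.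
  have -> : x = i1 p by apply: ord_inj; rewrite Hi.
  by rewrite q_i1 (eqP Hlow).
- move=> /validP Hv.
  have HdM' := HdM.
  case: (Hv (Ordinal HdM') (leqnn _)) => /= H1 H2.
  have Hi : i1 p = Ordinal HdM' by apply/eqP; by rewrite eq_sym -q_eqd H2.
  apply/and3P; split.
  + apply/validP => x Hx; apply: Hv; exact: ltnW.
  + by rewrite /low Hi H1.
  + by rewrite Hi.
Qed.

Lemma door_FL (l : nat -> nat) : door D l D = FLb d l.
Proof.
apply: eq_forallb => a; apply/existsP/existsP => [[j /andP [Hj Hl]]|[j Hl]].
- have Hjd : j < d.+1 by have := ltn_ord j; rewrite ltnS leq_eqVlt (negbTE Hj).
  by exists (Ordinal Hjd).
- have Hj : j < D.+1 by apply: ltn_trans (ltn_ord j) _.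
  exists (Ordinal Hj) => /=; rewrite Hl andbT neq_ltn; by rewrite ltn_ord.
Qed.


Lemma mid_even i : i < d -> ~~ odd (\sum_(p | valid D p) door D (lab p) i.+1).
Proof.
move=> Hi.
have Hi1 : i < M by apply: ltn_trans Hi HdM.
have Hi2 : i.+1 < M by apply: leq_ltn_trans Hi HdM.
pose t : {perm 'I_M} := tperm (inord i) (inord i.+1).
have ti : forall v : 'I_M, forall j, j != i.+1 -> (t v < j) = (v < j).
  move=> v j Hj; rewrite /t.
  case: (eqVneq v (inord i)) => [->|H1]; first by rewrite tpermL !inordK //; rewrite ltn_neqAle eq_sym Hj /=.
  case: (eqVneq v (inord i.+1)) => [->|H2]; first by rewrite tpermR !inordK // [RHS]ltn_neqAle eq_sym Hj.
  by rewrite tpermD // eq_sym.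
pose g (p : simp) : simp := (p.1, (p.2 * t)%g).
apply: (even_invol (g := g)).
- move=> p /validP Hv; apply/validP => x Hx; case: (Hv x Hx) => H1 H2; split => //=.
  rewrite permM (_ : p.2 x = x); last exact: ord_inj.
  rewrite /t tpermD //; apply/eqP => E; move: Hx; rewrite -E inordK //.
    by move=> H; move: (ltn_trans H Hi); rewrite ltnn.
  by rewrite ltnNge Hi.
- by move=> p _; rewrite /g /= -mulgA tperm2 mulg1; case: p.
- move=> p _; apply/negP => /eqP E.
  have : (p.2 * t)%g ((p.2^-1)%g (inord i)) = p.2 ((p.2^-1)%g (inord i)) by rewrite {2}(_ : p.2 = (p.2 * t)%g) //; move: E => /(congr1 snd) /= ->.
  rewrite permM !permKV /t tpermL => /(congr1 (@nat_of_ord _)); rewrite !inordK // => E'.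
  by move: (n_Sn i); rewrite E'.
- move=> p _ /=; congr nat_of_bool; refine (door_ext _) => j Hj Hji; rewrite /lab /vtx /=.
  congr lam; apply: functional_extensionality => x; by rewrite permM ti.
Qed.

Lemma step_parity : odd (S D) = odd (S d).
Proof.
have Hdec : forall p : simp, \sum_(k < D.+1) door D (lab p) k =
    door D (lab p) 0 + door D (lab p) D + \sum_(i < d) door D (lab p) i.+1.
  move=> p; rewrite big_ord_recr big_ord_recl /=.
  rewrite -addnA [_ + door D _ D]addnC addnA; by [].
have E1 : odd (\sum_(p | valid D p) \sum_(k < D.+1) door D (lab p) k) = odd (S D).
  rewrite /S !odd_sum; apply: eq_bigr => p Hp; rewrite local_parity ?oddb //.
  move=> j Hj; exact: lab_le.
rewrite -E1 (eq_bigr _ (fun p _ => Hdec p)) !big_split /=.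
rewrite (bigID up) /= big1 ?add0n; last first.
  by move=> p /andP [Hv Hu]; rewrite up_door.
rewrite [X in _ + X + _](bigID low) /=.
rewrite [X in _ + (X + _) + _](bigID (fun p => i1 p == d :> nat)) /=.
rewrite [X in _ + (_ + X + _) + _]big1; last first.
  by move=> p /andP [/andP [Hv Hl] Hne]; rewrite low_door.
have ES : \sum_(p | valid D p && low p && (i1 p == d :> nat)) door D (lab p) D = S d.
  apply: eq_big => p; first by rewrite -andbA low_valid.
  by move=> _; rewrite door_FL.
have EX : \sum_(p | valid D p && ~~ up p) door D (lab p) 0 =
          \sum_(p | valid D p && ~~ low p) door D (lab p) D.
  transitivity (\sum_(p | A p) door D (lab (phi p)) D).
    by apply: eq_bigr => p HA; rewrite door_phi.
  apply: (@sum_bij _ A B phi psi (fun p => door D (lab p) D)).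
  - exact: AB.
  - exact: BA.
  - exact: psi_phi.
  - exact: phi_psi.
have EM : ~~ odd (\sum_(p | valid D p) \sum_(i < d) door D (lab p) i.+1).
  rewrite exchange_big odd_sum big1 //= => i _.
  by apply/negbTE; apply: mid_even.
rewrite ES addn0 EX !oddD (negbTE EM).
by case: (odd (S d)); case: (odd (\sum_(p | valid D p && ~~ low p) door D (lab p) D)).
Qed.

End Step.

Theorem sperner_odd d : d <= M -> odd (S d).
Proof.
elim: d => [|d IH] Hd; first exact: S0_odd.
rewrite step_parity //; apply: IH; exact: ltnW.
Qed.

Theorem sperner : exists p : simp, FLb M (lab p) /\ valid M p.
Proof.
have := sperner_odd (leqnn M); rewrite /S.
case: (pickP (fun p : simp => valid M p && FLb M (lab p))) => [p /andP [H1 H2]|H].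
  by move=> _; exists p.
by rewrite big1 // => p Hp; move: (H p); rewrite Hp /= => ->.
Qed.

End Sperner.

Definition pb (P : Prop) : bool := if excluded_middle_informative P then true else false.
Lemma pbP (P : Prop) : reflect P (pb P).
Proof. rewrite /pb; case: excluded_middle_informative => H; by constructor. Qed.

Section Leb.
Variables (m0 n0 : nat) (col : ('I_m0.+1 -> nat) -> nat).
Local Notation M := m0.+1.
Local Notation N := n0.+1.
Hypothesis Hcol : forall x, col x < M.

Definition adj (x y : 'I_M -> nat) := forall i, x i <= (y i).+1 /\ y i <= (x i).+1.

Inductive chain (P : ('I_M -> nat) -> Prop) : ('I_M -> nat) -> ('I_M -> nat) -> Prop :=
  | ch_refl x : P x -> chain P x x
  | ch_step x y z : P x -> adj x y -> chain P y z -> chain P x z.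

Lemma chain_Pl P x y : chain P x y -> P x.
Proof. by case. Qed.
Lemma chain_Pr P x y : chain P x y -> P y.
Proof. by elim. Qed.
Lemma chain_trans P x y z : chain P x y -> chain P y z -> chain P x z.
Proof. elim=> // a b c Pa Hab _ IH Hcz; apply: ch_step Pa Hab (IH Hcz). Qed.
Lemma chain_sym P x y : chain P x y -> chain P y x.
Proof.
elim=> [a Pa|a b c Pa Hab Hbc IH]; first exact: ch_refl.
apply: chain_trans IH _; apply: ch_step (chain_Pl Hbc) _ (ch_refl Pa).
by move=> i; case: (Hab i).
Qed.

Definition Pc c (x : 'I_M -> nat) := board n0 x /\ col x = c.

Theorem lebesgue : exists c x y (i : 'I_M), chain (Pc c) x y /\ x i = N /\ y i = 0.
Proof.
apply: NNPP => Hno.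
have Hfar : forall c x y (i : 'I_M), chain (Pc c) x y -> x i = N -> y i = 0 -> False.
  move=> c x y i H1 H2 H3; apply: Hno; by exists c, x, y, i.
pose E x (i : 'I_M) := (exists y, chain (Pc (col x)) x y /\ y i = 0) \/ x i = 0.
pose lam x := if [pick i : 'I_M | ~~ pb (E x i)] is Some i then (i : nat).+1 else 0.
have lamE : forall x y, (forall i, E x i <-> E y i) -> lam x = lam y.
  move=> x y H; rewrite /lam (@eq_pick _ _ (fun i => ~~ pb (E y i))) //.
  move=> i /=; case: (pbP (E x i)); case: (pbP (E y i)) => //; move: (H i); tauto.
have HLl : forall x, lam x <= M.
  move=> x; rewrite /lam; case: pickP => // i _; exact: ltn_ord.
have Hal : forall x (i : 'I_M), x i = 0 -> lam x <> i.+1.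
  move=> x i Hx; rewrite /lam; case: pickP => // j /negP Hj [] /ord_inj E'.
  by apply: Hj; apply/pbP; right; rewrite E'.
have Hbl : forall x (i : 'I_M), board n0 x -> x i = N -> lam x <> 0.
  move=> x i Hb Hx; rewrite /lam; case: pickP => // H _.
  move: (H i) => /negbFE /pbP [[y [Hy1 Hy2]]|Hx0]; first exact: (Hfar _ _ _ _ Hy1 Hx Hy2).
  by rewrite Hx in Hx0.
case: (sperner HLl Hal Hbl) => p [HFL Hv].
pose cv (j : 'I_M.+1) : 'I_M := Ordinal (Hcol (vtx p j)).
have : ~~ injectiveb cv.
  apply/negP => /injectiveP Hinj; have := leq_card _ Hinj.
  by rewrite !card_ord ltnn.
move=> /injectivePn [j1 [j2 Hne Hc]].
have Hcol12 : col (vtx p j1) = col (vtx p j2) by move: (congr1 (@nat_of_ord _) Hc).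
have adjb : forall (a : nat) (b1 b2 : bool), a + b1 <= (a + b2).+1.
  move=> a [] [] /=; apply/leP; unfold addn, addn_rec; lia.
have Hch : chain (Pc (col (vtx p j1))) (vtx p j1) (vtx p j2).
  apply: (ch_step (y := vtx p j2)); first by split => //; exact: vtx_board.
    by move=> i; rewrite /vtx; split; apply: adjb.
  apply: ch_refl; split; [exact: vtx_board | by []].
have Hlab : lam (vtx p j1) = lam (vtx p j2).
  apply: lamE => i; rewrite /E -Hcol12; split.
  - move=> [[y [Hy1 Hy2]]|Hx0]; left.
      exists y; split => //; apply: chain_trans (chain_sym Hch) Hy1.
    by exists (vtx p j1); split => //; apply: chain_sym.
  - move=> [[y [Hy1 Hy2]]|Hx0]; left.
      exists y; split => //; apply: chain_trans Hch Hy1.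
    by exists (vtx p j2).
have HM : forall j, j <= M -> lab lam p j <= M by move=> j Hj; apply: (lab_le HLl Hal Hv Hj).
pose f (j : 'I_M.+1) : 'I_M.+1 := inord (lab lam p j).
have fE : forall j, (f j : nat) = lab lam p j.
  by move=> j; rewrite /f inordK // ltnS HM // -ltnS.
have Hinj : injective f.
  have Him : f @: setT = setT.
    apply/setP => y; rewrite !inE; move/forallP: HFL => /(_ y) /existsP [x /eqP Hx].
    apply/imsetP; exists x; rewrite ?inE //; apply: ord_inj; by rewrite fE.
  have: #|f @: setT| == #|[set: 'I_M.+1]| by rewrite Him.
  move/imset_injP => H x y Hxy; apply: H => //; by rewrite inE.
move/negP: Hne; apply; apply/eqP; apply: Hinj; apply: ord_inj; by rewrite !fE.
Qed.
End Leb.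
End SpM.
Open Scope R_scope.

Definition ext (m0 : nat) (x : 'I_m0.+1 -> nat) : nat -> nat :=
  fun i => if (i < m0.+1)%N then x (inord i) else 0%N.
Arguments ext {m0}.

Lemma ext_o m0 (x : 'I_m0.+1 -> nat) (o : 'I_m0.+1) : ext x o = x o.
Proof. by rewrite /ext ltn_ord inord_val. Qed.

Lemma ext_lt m0 (x y : 'I_m0.+1 -> nat) i : (i < S m0)%coq_nat ->
  exists o : 'I_m0.+1, ext x i = x o /\ ext y i = y o.
Proof. move=> /ltP H; exists (Ordinal H); rewrite /ext H; split; congr (_ _); apply: ord_inj; by rewrite inordK. Qed.

Lemma asdim_inf : asdim_AN_infinite dK.
Proof.
intros n [C [k [HC Hcov]]].
destruct (choose_e C k n HC) as [e [He1 He2]].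
set (bb := Nat.pow 2 e) in *.
set (s := INR (Nat.add e 3)).
have Hs : (s > 0)%R by apply: lt_0_INR; lia.
destruct (Hcov s Hs) as [U [Hcover Hbound]].
pose col (x : 'I_n.+1 -> nat) : nat :=
  proj1_sig (constructive_indefinite_description _ (Hcover (code bb (S n) (ext x)))).
have Hcolspec : forall x, (col x <= n)%coq_nat /\ U (col x) (code bb (S n) (ext x)).
  move=> x; exact: (proj2_sig (constructive_indefinite_description _ (Hcover (code bb (S n) (ext x))))).
have Hcol : forall x, (col x < n.+1)%N by move=> x; apply/leP; have := proj1 (Hcolspec x); lia.
set n0 := Nat.pred (Nat.pow 2 bb).
have HN : n0.+1 = Nat.pow 2 bb.
  rewrite /n0; have := Nat.pow_nonzero 2 bb; lia.
have [c [x [y [i [Hch [Hx Hy]]]]]] := SpM.lebesgue n0 Hcol.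
have Hsc : forall x y, SpM.chain (SpM.Pc n0 col c) x y ->
    s_chain dK s (U c) (code bb (S n) (ext x)) (code bb (S n) (ext y)).
  move=> x1 y1; elim=> [x2 [Hb Hc]|x2 y2 z2 [Hb Hc] Hadj Hch2 IH].
  - apply: chain_refl; rewrite -Hc; exact: (proj2 (Hcolspec x2)).
  - apply: (chain_step _ _ _ _ (code bb (S n) (ext y2))) => //.
      rewrite -Hc; exact: (proj2 (Hcolspec x2)).
    have [Hb2 _] := SpM.chain_Pl Hch2.
    rewrite /dK; apply: (Rle_lt_trans _ (INR (Nat.add e 2))).
      apply: le_INR; apply: (Nat.le_trans _ (Aw (bb + S n))); last exact: Aw_bound.
      apply: nu_code_small => j Hj; have [o [E1 E2]] := @ext_lt n x2 y2 j Hj.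
      rewrite E1 E2; move: (Hb o) (Hb2 o) (Hadj o); rewrite HN => /leP H1 /leP H2 [/leP H3 /leP H4].
      lia.
    apply: lt_INR; lia.
have [Hb0 Hc0] := SpM.chain_Pl Hch.
have Hcn : (c <= n)%coq_nat by rewrite -Hc0; exact: (proj1 (Hcolspec x)).
have Hle := Hbound c Hcn _ _ (Hsc x y Hch).
have Hfar : (Nat.add bb 1 <= nu (Nat.lxor (code bb (S n) (ext x)) (code bb (S n) (ext y))))%coq_nat.
  apply: (@nu_code_far bb (S n) (ext x) (ext y) i); first by apply/ltP.
    by rewrite ext_o Hx HN.
  by rewrite ext_o Hy.
move/le_INR: Hfar; rewrite /dK in Hle; rewrite /s in Hle; move=> HH; lra.
Qed.

Theorem corollary3p9 :
  exists (K : Type) (mul : K -> K -> K) (one : K) (inv : K -> K) (dK : K -> K -> R),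
    is_group mul one inv /\
    locally_finite mul one inv /\
    proper_left_invariant_metric mul one dK /\
    asdim_AN_infinite dK /\
    all_cones_ultrametric dK.
Proof.
exists nat, Nat.lxor, 0%N, (fun x => x), dK.
split; [exact: grp|split; [exact: locfin|split; [exact: metric|split; [exact: asdim_inf|exact: cones]]]].
Qed.
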